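(* For any atomic proposition $p$, there exists an adequate $p$-removing mapping $\mathsf{re}_p:\mathcal P\times\mathcal P\to\mathcal P$.
   Context: Formulas are built from $\bot$ and atoms by $\to$ and $\Box$; sequents $\Gamma\Rightarrow\Delta$ have finite multisets of formulas on each side; $\Box\Pi$ denotes $\{\Box B:B\in\Pi\}$. The calculus $\mathsf{Grz}_\infty+\mathsf{cut}$ has initial sequents $\Gamma,p\Rightarrow p,\Delta$ ($p$ atomic), $\Gamma,\bot\Rightarrow\Delta$, and rules $(\to_L)$ from $\Gamma,B\Rightarrow\Delta$ and $\Gamma\Rightarrow A,\Delta$ infer $\Gamma,A\to B\Rightarrow\Delta$; $(\to_R)$ from $\Gamma,A\Rightarrow B,\Delta$ infer $\Gamma\Rightarrow A\to B,\Delta$; $(\mathsf{refl})$ from $\Gamma,B,\Box B\Rightarrow\Delta$ infer $\Gamma,\Box B\Rightarrow\Delta$; $(\Box)$ from left premise $\Gamma,\Box\Pi\Rightarrow A,\Delta$ and right premise $\Box\Pi\Rightarrow A$ infer $\Gamma,\Box\Pi\Rightarrow\Box A,\Delta$; $(\mathsf{cut})$ from $\Gamma\Rightarrow A,\Delta$ and $\Gamma,A\Rightarrow\Delta$ infer $\Gamma\Rightarrow\Delta$. An $\infty$-proof is a possibly infinite tree of sequents built by these rules with leaves labelled by initial sequents, in which every infinite branch passes through a right premise of $(\Box)$ infinitely often; $\mathcal P$ is the set of all $\infty$-proofs. The $n$-fragment of an $\infty$-proof is the finite tree obtained by cutting every branch at the $n$-th (from the root) right premise of $(\Box)$. Write $\pi\sim_n\tau$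 if the $n$-fragments of $\pi,\tau$ coincide, and $\pi\sim_0\tau$ always. $\mathcal P_n$ is the set of $\infty$-proofs with no application of $(\mathsf{cut})$ in their $n$-fragment, and $\mathcal P_0=\mathcal P$. A pair $(\pi,\tau)$ is a cut pair with cut formula $A$ and cut result $\Gamma\Rightarrow\Delta$ if $\pi$ is an $\infty$-proof of $\Gamma\Rightarrow\Delta,A$ and $\tau$ is an $\infty$-proof of $A,\Gamma\Rightarrow\Delta$. A mapping $\mathsf u:\mathcal P\times\mathcal P\to\mathcal P$ is $A$-removing if it is non-expansive (i.e. $\pi\sim_n\pi'$ and $\tau\sim_n\tau'$ imply $\mathsf u(\pi,\tau)\sim_n\mathsf u(\pi',\tau')$ for all $n$) and maps every cut pair with cut formula $A$ to an $\infty$-proof of its cut result. It is adequate if for every $n\in\mathbb N$, $\pi,\tau\in\mathcal P_n$ implies $\mathsf u(\pi,\tau)\in\mathcal P_n$. *)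

(* Defs.v *)
From HB Require Import structures.
From mathcomp Require Import all_boot.
From mathcomp Require Import finmap multiset.
From Stdlib Require Import List.

Set Implicit Arguments.
Unset Strict Implicit.
Unset Printing Implicit Defensive.

Local Open Scope mset_scope.

Inductive form : Type :=
  | Fbot : form
  | Fvar : nat -> form
  | Fimp : form -> form -> form
  | Fbox : form -> form.

Fixpoint form_enc (A : form) : GenTree.tree nat :=
  match A with
  | Fbot => GenTree.Node 0 [::]
  | Fvar p => GenTree.Leaf p
  | Fimp A B => GenTree.Node 1 [:: form_enc A; form_enc B]
  | Fbox A => GenTree.Node 2 [:: form_enc A]
  end.

Fixpoint form_dec (t : GenTree.tree nat) : option form :=
  match t with
  | GenTree.Leaf p => Some (Fvar p)
  | GenTree.Node 0 [::] => Some Fbot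
  | GenTree.Node 1 [:: a; b] =>
      match form_dec a, form_dec b with
      | Some A, Some B => Some (Fimp A B)
      | _, _ => None
      end
  | GenTree.Node 2 [:: a] =>
      match form_dec a with Some A => Some (Fbox A) | None => None end
  | _ => None
  end.

Lemma form_encK : pcancel form_enc form_dec.
Proof. by elim=> [|p|A IHA B IHB|A IHA] //=; rewrite ?IHA ?IHB. Qed.

HB.instance Definition _ := Countable.copy form (pcan_type form_encK).

Definition sequent := ({mset form} * {mset form})%type.

Definition mbox (Pi : {mset form}) : {mset form} :=
  seq_mset (map Fbox (enum_mset Pi)).

(** * Rules of Grz_infty + cut (nodes of a proof tree are labelled by the
    rule applied there; [RInit] marks a leaf labelled by an initial sequent). *)
Inductive rule : Type := RInit | RImpL | RImpR | RRefl | RBox | RCut.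

Definition rule_eqb (r r' : rule) : bool :=
  match r, r' with
  | RInit, RInit | RImpL, RImpL | RImpR, RImpR | RRefl, RRefl
  | RBox, RBox | RCut, RCut => true
  | _, _ => false
  end.

Definition step (s : sequent) (r : rule) (ps : list sequent) : Prop :=
  match r with
  | RInit => ps = nil /\
      ((exists (G D : {mset form}) (p : nat),
          s = (Fvar p +` G, Fvar p +` D)) \/
       (exists (G D : {mset form}), s = (Fbot +` G, D)))
  | RImpL => exists (G D : {mset form}) (A B : form),
      s = (Fimp A B +` G, D) /\ ps = [:: (B +` G, D); (G, A +` D)]
  | RImpR => exists (G D : {mset form}) (A B : form),
      s = (G, Fimp A B +` D) /\ ps = [:: (A +` G, B +` D)]
  | RRefl => exists (G D : {mset form}) (B : form),
      s = (Fbox B +` G, D) /\ ps = [:: (B +` (Fbox B +` G), D)]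
  | RBox => exists (G Pi D : {mset form}) (A : form),
      s = (G `+` mbox Pi, Fbox A +` D) /\
      ps = [:: (G `+` mbox Pi, A +` D); (mbox Pi, [mset A])]
  | RCut => exists (G D : {mset form}) (A : form),
      s = (G, D) /\ ps = [:: (G, A +` D); (A +` G, D)]
  end.

CoInductive tree : Type :=
  | Node : sequent -> rule -> list tree -> tree.

Definition root (t : tree) : sequent := let: Node s _ _ := t in s.
Definition rule_of (t : tree) : rule := let: Node _ r _ := t in r.
Definition children (t : tree) : list tree := let: Node _ _ ts := t in ts.

Fixpoint sub (t : tree) (a : list nat) : option tree :=
  match a with
  | nil => Some t
  | i :: a' =>
      match List.nth_error (children t) i with
      | Some t' => sub t' a'
      | None => None
      end
  end.

Definition local_ok (t : tree) : Prop :=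
  step (root t) (rule_of t) (List.map root (children t)).

Definition prefix (f : nat -> nat) (n : nat) : list nat := List.map f (List.seq 0 n).

Definition infinite_branch (t : tree) (f : nat -> nat) : Prop :=
  forall n, sub t (prefix f n) <> None.

(** The edge from position [m] to position [m+1] of branch [f] enters the
    right premise (index 1) of an application of (Box). *)
Definition right_box_premise (t : tree) (f : nat -> nat) (m : nat) : Prop :=
  (exists t', sub t (prefix f m) = Some t' /\ rule_of t' = RBox) /\ f m = 1%N.

Definition is_iproof (t : tree) : Prop :=
  (forall a t', sub t a = Some t' -> local_ok t') /\
  (forall f, infinite_branch t f ->
     forall n, exists m, (n <= m)%N /\ right_box_premise t f m).

Definition iproof : Type := {t : tree | is_iproof t}.

(** * n-fragments.  [frag k t a] describes the node at address [a] of the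
    fragment of [t] obtained by cutting every branch at the k-th right premise
    of (Box): [Some (s, Some (r, m))] for an inner node with sequent [s],
    rule [r] and [m] premises; [Some (s, None)] for a node at which the branch
    is cut (the k-th right premise of (Box) on its branch), which is kept as a
    leaf labelled by its sequent; [None] for addresses outside the fragment. *)
Fixpoint frag (k : nat) (t : tree) (a : list nat)
  : option (sequent * option (rule * nat)) :=
  match a with
  | nil =>
      Some (root t, match k with 0 => None | _ => Some (rule_of t, length (children t)) end)
  | i :: a' =>
      match k with
      | 0 => None
      | S k' =>
          match List.nth_error (children t) i with
          | None => None
          | Some t' =>
              frag (if rule_eqb (rule_of t) RBox && (i == 1)%N then k' else k) t' a'
          end
      end
  end.

Definition sim (n : nat) (pi tau : iproof) : Prop :=
  match n with
  | 0 => True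
  | _ => forall a, frag n (proj1_sig pi) a = frag n (proj1_sig tau) a
  end.

Definition in_P (n : nat) (pi : iproof) : Prop :=
  match n with
  | 0 => True
  | _ => forall a s m, frag n (proj1_sig pi) a <> Some (s, Some (RCut, m))
  end.

Definition iroot (pi : iproof) : sequent := root (proj1_sig pi).

Definition cut_pair (A : form) (G D : {mset form}) (pi tau : iproof) : Prop :=
  iroot pi = (G, A +` D) /\ iroot tau = (A +` G, D).

Definition non_expansive (u : iproof -> iproof -> iproof) : Prop :=
  forall n pi pi' tau tau', sim n pi pi' -> sim n tau tau' ->
    sim n (u pi tau) (u pi' tau').

Definition removing (A : form) (u : iproof -> iproof -> iproof) : Prop :=
  non_expansive u /\
  forall (G D : {mset form}) (pi tau : iproof),
    cut_pair A G D pi tau -> iroot (u pi tau) = (G, D).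

Definition adequate (u : iproof -> iproof -> iproof) : Prop :=
  forall n pi tau, in_P n pi -> in_P n tau -> in_P n (u pi tau).

(* Main.v *)
Require Import Defs.
From mathcomp Require Import all_boot.
From mathcomp Require Import finmap multiset zify.
From Stdlib Require Import ClassicalEpsilon Classical.
From Stdlib Require List.
Import Defs.

Set Implicit Arguments. Unset Strict Implicit. Unset Printing Implicit Defensive.
Local Open Scope mset_scope.

Definition cnt (A : {mset form}) (x : form) : nat := A x.
Lemma cnt_ext (A B : {mset form}) : (forall x, cnt A x = cnt B x) -> A = B.
Proof. by move=> h; apply/msetP => x; exact: h x. Qed.
Lemma mD (A B : {mset form}) x : cnt (A `+` B) x = (cnt A x + cnt B x)%N. Proof. by rewrite /cnt msetE2. Qed.
Lemma mB (A B : {mset form}) x : cnt (A `\` B) x = (cnt A x - cnt B x)%N. Proof. by rewrite /cnt msetE2. Qed.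
Lemma m1 (a : form) x : cnt [mset a] x = (x == a) :> nat. Proof. by rewrite /cnt msetnE; case: (x == a). Qed.
Lemma m0 x : cnt (mset0 : {mset form}) x = 0%N. Proof. by rewrite /cnt mset0E. Qed.
Ltac mrw := rewrite ?(mD, mB, m1, m0).

Definition frob (t : tree) : tree := match t with Node s r ts => Node s r ts end.
Lemma frob_eq t : t = frob t. Proof. by case: t. Qed.

Definition E k t t' := forall a, frag k t a = frag k t' a.
Definition NoCut k t := forall a s m, frag k t a <> Some (s, Some (RCut, m)).
Definition ni t := (root t, rule_of t, List.map root (children t)).
Definition lvl k t i := if rule_eqb (rule_of t) RBox && (i == 1)%N then k else k.+1.

Lemma frag_cons k t i a : frag k.+1 t (i :: a) =
  match List.nth_error (children t) i with None => None | Some c => frag (lvl k t i) c a end.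
Proof. by []. Qed.

Lemma E_root0 k t t' : E k t t' -> root t = root t'.
Proof. by move=> H; have := H [::]; case: k {H} => [|k] [->]. Qed.

Lemma E_root k t t' : E k.+1 t t' ->
  [/\ root t = root t', rule_of t = rule_of t' & length (children t) = length (children t')].
Proof. by move=> H; have := H [::] => /= [[-> -> ->]]. Qed.

Lemma E_child k t t' i c : E k.+1 t t' -> List.nth_error (children t) i = Some c ->
  exists c', List.nth_error (children t') i = Some c' /\ E (lvl k t i) c c'.
Proof.
move=> H Hc; have [_ hr hl] := E_root H.
case e: (List.nth_error (children t') i) => [c'|].
  exists c'; split => // a; have := H (i :: a); rewrite !frag_cons Hc e /lvl hr //.
have := (proj1 (List.nth_error_Some (children t) i)); rewrite Hc => /(_ ltac:(discriminate)).
by move/List.nth_error_None: e; rewrite hl => /leP; lia.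
Qed.

Lemma E_ni k t t' : E k.+1 t t' -> ni t = ni t'.
Proof.
move=> H; have [h1 h2 h3] := E_root H; rewrite /ni h1 h2; congr (_, _, _).
apply: List.nth_error_ext => n; rewrite !List.nth_error_map.
case e: (List.nth_error (children t) n) => [c|].
  by have [c' [-> /E_root0 /= ->]] := E_child H e.
move/List.nth_error_None: e; rewrite h3 => /List.nth_error_None -> //.
Qed.

Lemma NC_rule k t : NoCut k.+1 t -> rule_of t <> RCut.
Proof. by move=> H e; apply: (H [::] (root t) (length (children t))); rewrite /= e. Qed.

Lemma NC_child k t i c : NoCut k.+1 t -> List.nth_error (children t) i = Some c ->
  NoCut (lvl k t i) c.
Proof. by move=> H Hc a s m; have := H (i :: a) s m; rewrite frag_cons Hc. Qed.

Lemma prefix_S f n : prefix f n.+1 = f 0 :: prefix (fun j => f j.+1) n.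
Proof. by rewrite /prefix /= -List.seq_shift List.map_map. Qed.

Lemma prefix_snoc f n : prefix f n.+1 = prefix f n ++ [:: f n].
Proof. by rewrite /prefix List.seq_S List.map_app. Qed.

Lemma sub_app t a b : sub t (a ++ b) = match sub t a with Some c => sub c b | None => None end.
Proof.
elim: a t => [|i a IH] t //=; case: (List.nth_error (children t) i) => //.
Qed.

Lemma iproof_child t i c : is_iproof t -> List.nth_error (children t) i = Some c -> is_iproof c.
Proof.
move=> [H1 H2] Hc; split.
  by move=> a t' h; apply: (H1 (i :: a)); rewrite /= Hc.
move=> f fb n.
pose g j := match j with 0 => i | S j' => f j' end.
have gb : infinite_branch t g.
  by case=> [|m]; [|rewrite prefix_S /= Hc; exact: fb].
have [m [hm [[t' [h1 h2]] h3]]] := H2 g gb n.+1.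
case: m hm h1 h3 => [|m] // hm h1 h3.
exists m; split => //; split => //; exists t'; split => //.
by move: h1; rewrite prefix_S /= Hc.
Qed.

Lemma iproof_sub a t c : is_iproof t -> sub t a = Some c -> is_iproof c.
Proof.
elim: a t => [|i a IH] t /=; first by move=> ? [<-].
case e: (List.nth_error (children t) i) => [c'|] // Ht; apply: IH.
exact: iproof_child e.
Qed.

Lemma branch_tail m T f u : infinite_branch T f -> sub T (prefix f m) = Some u ->
  is_iproof u -> forall n, exists m', n <= m' /\ right_box_premise T f m'.
Proof.
elim: m T f => [|m IH] T f fb h hu n.
  by move: h => /= [eq]; subst u; apply: hu.2.
move: h; rewrite prefix_S /=; case e: (List.nth_error (children T) (f 0)) => [c|] // h.
have fb' : infinite_branch c (fun j => f j.+1).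
  by move=> j; have := fb j.+1; rewrite prefix_S /= e.
have [m' [h1 [[t' [h2 h3]] h4]]] := IH c _ fb' h hu n.
exists m'.+1; split; first by apply: leq_trans h1 _.
by split => //; exists t'; rewrite prefix_S /= e.
Qed.

Lemma nth_none_len (A B : Type) (l : list A) (l' : list B) i :
  length l = length l' -> List.nth_error l i = None -> List.nth_error l' i = None.
Proof. by move=> h /List.nth_error_None; rewrite h => /List.nth_error_None. Qed.

Section Gen.
Variables (St : Type) (dec : St -> tree -> tree + sequent) (nxt : St -> tree -> nat -> St).

CoFixpoint gen (sg : St) (t : tree) : tree :=
  match dec sg t with
  | inl u => u
  | inr s' =>
    match t with
    | Node _ r ts =>
      Node s' r (match ts with
                 | nil => nil
                 | c1 :: ts1 => gen (nxt sg t 0) c1 ::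
                    match ts1 with
                    | nil => nil
                    | c2 :: ts2 => (if rule_eqb r RBox then c2 else gen (nxt sg t 1) c2) :: ts2
                    end
                 end)
    end
  end.

Definition kids sg t :=
  match children t with
  | nil => nil
  | c1 :: ts1 => gen (nxt sg t 0) c1 ::
     match ts1 with
     | nil => nil
     | c2 :: ts2 => (if rule_eqb (rule_of t) RBox then c2 else gen (nxt sg t 1) c2) :: ts2
     end
  end.

Definition isgen t i := (i <= 1)%N && ~~ (rule_eqb (rule_of t) RBox && (i == 1)%N).
Definition kid sg t i c := if isgen t i then gen (nxt sg t i) c else c.

Lemma gen_unfold sg t : gen sg t =
  match dec sg t with inl u => u | inr s => Node s (rule_of t) (kids sg t) end.
Proof.
rewrite [LHS]frob_eq /=; case: (dec sg t) => [u|s]; first by case: u.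
by case: t.
Qed.

Lemma len_kids sg t : length (kids sg t) = length (children t).
Proof. by rewrite /kids; case: (children t) => [|c1 [|c2 ts]]. Qed.

Lemma nth_kids sg t i : List.nth_error (kids sg t) i =
  match List.nth_error (children t) i with None => None | Some c => Some (kid sg t i c) end.
Proof.
rewrite /kids /kid /isgen; case: (children t) => [|c1 [|c2 ts]]; case: i => [|[|i]] //=;
rewrite ?andbF ?andbT //=; try by case: (rule_eqb _ _).
by case: (List.nth_error ts i).
Qed.

Lemma lvl_gen k t i : isgen t i -> lvl k t i = k.+1.
Proof. by rewrite /isgen /lvl => /andP [_ /negbTE ->]. Qed.

Lemma isgen_cases t i : isgen t i -> i = 0 \/ (i = 1 /\ rule_of t <> RBox).
Proof.
rewrite /isgen; case: i => [|[|i]] //=; auto.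
by rewrite andbT => /negP h; right; split => // e; apply: h; rewrite e.
Qed.

Section Iproof.
Variable Inv : St -> tree -> Prop.
Hypothesis HIp : forall sg t, Inv sg t -> is_iproof t.
Hypothesis HIl : forall sg t u, Inv sg t -> dec sg t = inl u -> is_iproof u.
Hypothesis HIr : forall sg t s, Inv sg t -> dec sg t = inr s ->
  step s (rule_of t) (List.map root (kids sg t)) /\
  forall i c, List.nth_error (children t) i = Some c -> isgen t i -> Inv (nxt sg t i) c.

Lemma gen_local a sg t t' : Inv sg t -> sub (gen sg t) a = Some t' -> local_ok t'.
Proof.
elim: a sg t => [|i a IH] sg t hI; rewrite gen_unfold; case e: (dec sg t) => [u|s].
- by move=> h; exact: (HIl hI e).1 [::] _ h.
- by move=> /= [<-]; exact: (HIr hI e).1.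
- by move=> h; exact: (HIl hI e).1 (i :: a) _ h.
- rewrite /= nth_kids; case ec: (List.nth_error (children t) i) => [c|] //.
  rewrite /kid; case g: (isgen t i).
    by apply: IH; exact: (HIr hI e).2 i c ec g.
  by move=> h; have hc := iproof_child (HIp hI) ec; exact: hc.1 a _ h.
Qed.

Lemma gen_iproof sg t : Inv sg t -> is_iproof (gen sg t).
Proof.
move=> hI; split; first by move=> a t'; apply: gen_local hI.
move=> f fb.
suff [m [u [h1 h2]]] : exists m u, sub (gen sg t) (prefix f m) = Some u /\ is_iproof u
  by exact: branch_tail fb h1 h2.
apply: NNPP => hn.
have P : forall m, exists sg' c, [/\ sub t (prefix f m) = Some c, Inv sg' c &
          sub (gen sg t) (prefix f m) = Some (gen sg' c)].
  elim=> [|m [sg' [c [h1 h2 h3]]]]; first by exists sg, t.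
  have := fb m.+1; rewrite prefix_snoc sub_app h3 [gen sg' c]gen_unfold.
  case e: (dec sg' c) => [u|s].
    move=> _; exfalso; apply: hn; exists m, u; split; last exact: HIl h2 e.
    by rewrite h3 gen_unfold e.
  rewrite /= nth_kids; case ec: (List.nth_error (children c) (f m)) => [c0|] // _.
  rewrite /kid; case g: (isgen c (f m)).
    exists (nxt sg' c (f m)), c0; split.
    - by rewrite ?prefix_snoc sub_app h1 /= ec.
    - exact: (HIr h2 e).2 _ _ ec g.
    - by rewrite /= ?nth_kids ?ec /kid ?g.
  exfalso; apply: hn; exists m.+1, c0; split; last exact: iproof_child (HIp h2) ec.
  by rewrite prefix_snoc sub_app h3 [gen sg' c]gen_unfold e /= nth_kids ec /kid g.
have tb : infinite_branch t f by move=> m; have [sg' [c [h1 _]]] := P m; rewrite h1.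
have [m [_ [[c [h1 h2]] h3]]] := (HIp hI).2 f tb 0.
have [sg' [c' [h1' h2' h3']]] := P m.
rewrite h1 in h1'; case: h1' => ?; subst c'.
have [sg'' [c'' [_ _ h3'']]] := P m.+1.
move: h3''; rewrite prefix_snoc sub_app h3' [gen sg' c]gen_unfold.
case e: (dec sg' c) => [u|s].
  move=> _; apply: hn; exists m, u; split; last exact: HIl h2' e.
  by rewrite h3' gen_unfold e.
rewrite /= nth_kids h3; case ec: (List.nth_error (children c) 1) => [c0|] //.
have g : isgen c 1 = false by rewrite /isgen h2.
move=> _; apply: hn; exists m.+1, c0; split; last exact: iproof_child (HIp h2') ec.
by rewrite prefix_snoc sub_app h3' [gen sg' c]gen_unfold e /= nth_kids h3 ec /kid g.
Qed.
End Iproof.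

Section Nonexp.
Variable Rel : nat -> St -> St -> Prop.
Hypothesis HR : forall k sg sg' t t', Rel k.+1 sg sg' -> E k.+1 t t' ->
  [/\ (exists u u', [/\ dec sg t = inl u, dec sg' t' = inl u' & E k.+1 u u']) \/
      (exists s, dec sg t = inr s /\ dec sg' t' = inr s),
      Rel k.+1 (nxt sg t 0) (nxt sg' t' 0) &
      (rule_of t <> RBox -> Rel k.+1 (nxt sg t 1) (nxt sg' t' 1))].

Lemma gen_E k sg sg' t t' : Rel k.+1 sg sg' -> E k.+1 t t' -> E k.+1 (gen sg t) (gen sg' t').
Proof.
move=> hR hE a; elim: a sg sg' t t' hR hE => [|i a IH] sg sg' t t' hR hE;
rewrite [gen sg t]gen_unfold [gen sg' t']gen_unfold;
have [[[u [u' [e1 e2 hu]]]|[s [e1 e2]]] h0 h1] := HR hR hE; rewrite e1 e2 //.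
  by have [_ hr hl] := E_root hE; rewrite /= hr !len_kids hl.
have [_ hr hl] := E_root hE.
rewrite !frag_cons !nth_kids.
case ec: (List.nth_error (children t) i) => [c|]; last by rewrite (nth_none_len hl ec).
have [c' [ec' hc]] := E_child hE ec; rewrite ec'.
have gg : isgen t' i = isgen t i by rewrite /isgen hr.
rewrite /kid gg; case g: (isgen t i); last by rewrite /lvl /= -hr; exact: hc.
have l : (rule_eqb (rule_of t) RBox && (i == 1)%N) = false.
  by move: g; rewrite /isgen => /andP [_ /negbTE].
rewrite /lvl /= -hr l; apply: IH; last by move: hc; rewrite /lvl l.
by case: (isgen_cases g) => [->|[-> hb]] //; apply: h1.
Qed.
End Nonexp.

Section NoCutS.
Variable CF : nat -> St -> Prop.
Hypothesis HC : forall k sg t, CF k.+1 sg -> NoCut k.+1 t ->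
  [/\ (forall u, dec sg t = inl u -> NoCut k.+1 u), CF k.+1 (nxt sg t 0) &
      (rule_of t <> RBox -> CF k.+1 (nxt sg t 1))].

Lemma gen_NC k sg t : CF k.+1 sg -> NoCut k.+1 t -> NoCut k.+1 (gen sg t).
Proof.
move=> hC hN a; elim: a sg t hC hN => [|i a IH] sg t hC hN s m; rewrite gen_unfold;
have [hl h0 h1] := HC hC hN; case e: (dec sg t) => [u|s'].
- exact: hl.
- by move=> /= [_ hr _]; exact: NC_rule hN hr.
- exact: hl.
rewrite frag_cons nth_kids; case ec: (List.nth_error (children t) i) => [c|] //.
rewrite /kid; case g: (isgen t i); last exact: (NC_child hN ec).
change (frag (lvl k t i) (gen (nxt sg t i) c) a <> Some (s, Some (RCut, m))).
rewrite (lvl_gen _ g); apply: IH; last by rewrite -(lvl_gen k g); exact: NC_child hN ec.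
by case: (isgen_cases g) => [->|[-> hb]] //; apply: h1.
Qed.
End NoCutS.
End Gen.

Definition msub (A B : {mset form}) := forall x, (cnt A x <= cnt B x)%N.

Ltac meq := apply: cnt_ext => x;
  repeat match goal with H : msub _ _ |- _ => let h := fresh in have h := H x; revert h; revert H end;
  mrw; intros; lia.

Definition stepw (r : rule) (G D : {mset form}) (s : sequent) (ps : list sequent) : Prop :=
 match r with
 | RInit => ps = nil /\ ((exists q, s = (Fvar q +` G, Fvar q +` D)) \/ s = (Fbot +` G, D))
 | RImpL => exists A B, s = (Fimp A B +` G, D) /\ ps = [:: (B +` G, D); (G, A +` D)]
 | RImpR => exists A B, s = (G, Fimp A B +` D) /\ ps = [:: (A +` G, B +` D)]
 | RRefl => exists B, s = (Fbox B +` G, D) /\ ps = [:: (B +` (Fbox B +` G), D)]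
 | RBox => exists Pi A, s = (G `+` mbox Pi, Fbox A +` D) /\
            ps = [:: (G `+` mbox Pi, A +` D); (mbox Pi, [mset A])]
 | RCut => exists A, s = (G, D) /\ ps = [:: (G, A +` D); (A +` G, D)]
 end.

Lemma step_w s r ps : step s r ps <-> exists G D, stepw r G D s ps.
Proof.
case: r => /=; split.
- move=> [-> [[G [D [q ->]]]|[G [D ->]]]]; exists G, D; split => //; [left; exists q|right] => //.
- move=> [G [D [-> [[q ->]|->]]]]; split => //; [left; exists G, D, q|right; exists G, D] => //.
- by move=> [G [D [A [B h]]]]; exists G, D, A, B.
- by move=> [G [D [A [B h]]]]; exists G, D, A, B.
- by move=> [G [D [A [B h]]]]; exists G, D, A, B.
- by move=> [G [D [A [B h]]]]; exists G, D, A, B.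
- by move=> [G [D [B h]]]; exists G, D, B.
- by move=> [G [D [B h]]]; exists G, D, B.
- by move=> [G [Pi [D [A h]]]]; exists G, D, Pi, A.
- by move=> [G [D [Pi [A h]]]]; exists G, Pi, D, A.
- by move=> [G [D [A h]]]; exists G, D, A.
- by move=> [G [D [A h]]]; exists G, D, A.
Qed.

Lemma nth_of_error (l : list tree) j c x0 : List.nth_error l j = Some c -> nth x0 l j = c.
Proof. by elim: l j => [|a l IH] [|j] //=; [case|exact: IH]. Qed.

Section Tr.
Variables (RL AL RR AR : {mset form}) (spN : sequent * rule * list sequent -> option nat)
  (Iv : sequent -> Prop).

Definition M (s : sequent) : sequent := (s.1 `\` RL `+` AL, s.2 `\` RR `+` AR).
Definition trdec (_ : unit) (t : tree) : tree + sequent :=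
  match spN (ni t) with Some j => inl (nth t (children t) j) | None => inr (M (root t)) end.
Definition Tr t := gen trdec (fun _ _ _ => tt) tt t.

Definition Mmap r (ps : list sequent) :=
  match ps with
  | nil => nil
  | p1 :: ps1 => M p1 :: match ps1 with
                         | nil => nil
                         | p2 :: ps2 => (if rule_eqb r RBox then p2 else M p2) :: ps2
                         end
  end.

Lemma shift r G D s ps : stepw r G D s ps -> msub RL G -> msub RR D -> step (M s) r (Mmap r ps).
Proof.
move=> h HL HR; apply/step_w; exists (G `\` RL `+` AL), (D `\` RR `+` AR).
case: r h => /=.
- move=> [-> [[q ->]|->]]; split => //; [left; exists q|right]; rewrite /M /=; congr (_, _); meq.
- move=> [A [B [-> ->]]]; exists A, B; rewrite /M /=; split; [congr (_, _)|congr [:: (_, _); (_, _)]]; meq.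
- move=> [A [B [-> ->]]]; exists A, B; rewrite /M /=; split; [congr (_, _)|congr [:: (_, _)]]; meq.
- move=> [B [-> ->]]; exists B; rewrite /M /=; split; [congr (_, _)|congr [:: (_, _)]]; meq.
- move=> [Pi [A [-> ->]]]; exists Pi, A; rewrite /M /=; split; [congr (_, _)|congr [:: (_, _); _]]; meq.
- move=> [A [-> ->]]; exists A; rewrite /M /=; split; [congr (_, _)|congr [:: (_, _); (_, _)]]; meq.
Qed.

Hypothesis T4 : forall n j, spN n = Some j -> ~~ (rule_eqb n.1.2 RBox && (j == 1)%N).
Hypothesis T2 : forall t j, is_iproof t -> Iv (root t) -> spN (ni t) = Some j ->
  exists c, List.nth_error (children t) j = Some c /\ root c = M (root t).
Hypothesis T3 : forall t, is_iproof t -> Iv (root t) -> spN (ni t) = None ->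
  exists G D, [/\ stepw (rule_of t) G D (root t) (List.map root (children t)), msub RL G, msub RR D &
    forall i c, List.nth_error (children t) i = Some c ->
      ~~ (rule_eqb (rule_of t) RBox && (i == 1)%N) -> Iv (root c)].

Lemma Tr_root t : is_iproof t -> Iv (root t) -> root (Tr t) = M (root t).
Proof.
move=> hp hv; rewrite /Tr gen_unfold /trdec; case e: (spN (ni t)) => [j|] //.
have [c [h1 h2]] := T2 hp hv e; by rewrite (nth_of_error _ h1).
Qed.

Lemma Tr_iproof t : is_iproof t -> Iv (root t) -> is_iproof (Tr t).
Proof.
move=> hp hv; apply: (@gen_iproof _ _ _ (fun _ t => is_iproof t /\ Iv (root t))) => //.
- by move=> _ t0 [].
- move=> sg t0 u [h1 h2]; rewrite /trdec; case e: (spN (ni t0)) => [j|] // [<-].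
  have [c [e1 _]] := T2 h1 h2 e; rewrite (nth_of_error _ e1); exact: iproof_child h1 e1.
- move=> sg t0 s [h1 h2]; rewrite /trdec; case e: (spN (ni t0)) => [j|] // [<-].
  have [G [D [w hl hr hc]]] := T3 h1 h2 e.
  have ch : forall i c, List.nth_error (children t0) i = Some c -> isgen t0 i ->
      is_iproof c /\ Iv (root c).
    move=> i c ec g; split; first exact: iproof_child h1 ec.
    by apply: (hc i c ec); move: g => /andP [].
  split; last by move=> i c ec g; apply: ch ec g.
  suff -> : List.map root (kids trdec (fun _ _ _ => tt) tt t0) = Mmap (rule_of t0) (List.map root (children t0)).
    exact: shift w hl hr.
  move: ch; rewrite /kids /isgen; case: (children t0) => [|c1 [|c2 ts]] //= ch.
    by have [a1 a2] := ch 0 c1 erefl (ltac:(by rewrite andbF)); move: (Tr_root a1 a2); rewrite /Tr /= => ->.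
  have [a1 a2] := ch 0 c1 erefl (ltac:(by rewrite andbF)); move: (Tr_root a1 a2); rewrite /Tr /= => ->.
  case b: (rule_eqb (rule_of t0) RBox) => //.
  have [a3 a4] := ch 1 c2 erefl (ltac:(by rewrite b)).
  by move: (Tr_root a3 a4); rewrite /Tr /= => ->.
Qed.

Lemma Tr_E k t t' : E k.+1 t t' -> E k.+1 (Tr t) (Tr t').
Proof.
move=> hE; apply: (@gen_E _ _ _ (fun _ _ _ => True)) => // k0 sg sg' t0 t0' _ h0.
split => //; rewrite /trdec (E_ni h0); case e: (spN (ni t0')) => [j|]; last by right; exists (M (root t0')); rewrite (E_root0 h0).
left; exists (nth t0 (children t0) j), (nth t0' (children t0') j); split => //.
have nb := T4 e; have [_ hr _] := E_root h0; rewrite /= /ni -hr in nb.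
case ec: (List.nth_error (children t0) j) => [c|].
  have [c' [ec' hc]] := E_child h0 ec; rewrite (nth_of_error _ ec) (nth_of_error _ ec').
  by move: hc; rewrite /lvl (negbTE nb).
have [_ _ hl] := E_root h0.
have ec' := nth_none_len hl ec.
move/List.nth_error_None: ec => /leP ec; move/List.nth_error_None: ec' => /leP ec'.
by rewrite !nth_default.
Qed.

Lemma Tr_NC k t : NoCut k.+1 t -> NoCut k.+1 (Tr t).
Proof.
move=> hN; apply: (@gen_NC _ _ _ (fun _ _ => True)) => // k0 sg t0 _ h0.
split => // u; rewrite /trdec; case e: (spN (ni t0)) => [j|] // [<-].
have nb := T4 e; rewrite /= in nb.
case ec: (List.nth_error (children t0) j) => [c|].
  by rewrite (nth_of_error _ ec); have := NC_child h0 ec; rewrite /lvl (negbTE nb).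
move/List.nth_error_None: ec => /leP ec; by rewrite nth_default.
Qed.
End Tr.

Lemma mbox_nb Pi x : (forall B, x <> Fbox B) -> cnt (mbox Pi) x = 0%N.
Proof.
move=> h; rewrite /cnt /mbox mset_seqE; elim: (enum_mset Pi) => //= a s ->.
by case: eqP => // e; exfalso; apply: (h a).
Qed.

Lemma neF (a b : form) : a <> b -> (a == b) = false.
Proof. by move=> h; apply/negbTE/eqP. Qed.

Ltac nq := repeat match goal with
 | H : context [(?a == ?b)] |- _ =>
     rewrite (@neF a b) in H; [|by []]
 | |- context [(?a == ?b)] => rewrite (@neF a b); [|by []]
 end.

Lemma iproof_w t : is_iproof t -> exists G D, stepw (rule_of t) G D (root t) (List.map root (children t)).
Proof. by move=> h; apply/step_w; exact: h.1 [::] t erefl. Qed.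

Lemma left_side X r G D s ps :
  (forall B, X <> Fbox B) -> (forall q, X <> Fvar q) -> X <> Fbot ->
  stepw r G D s ps -> (0 < cnt s.1 X)%N ->
  (r = RImpL -> forall A B, X = Fimp A B -> s = (X +` G, D) ->
     ps = [:: (B +` G, D); (G, A +` D)] -> False) ->
  (0 < cnt G X)%N /\ forall i c, List.nth_error ps i = Some c ->
     ~~ (rule_eqb r RBox && (i == 1)%N) -> (0 < cnt c.1 X)%N.
Proof.
move=> hb hq hf; case: r => /=.
- move=> [-> [[q ->]|->]] /= h _; split => // [|[|i]] //; move: h; mrw.
    by rewrite (neF (hq q)).
  by rewrite (neF hf).
- move=> [A [B [-> ->]]] /= h hn.
  case: (X =P Fimp A B) => [e|ne]; first by exfalso; apply: (hn erefl A B e) => //; rewrite e.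
  move: h; mrw; rewrite (neF ne) /= => h; split => //; case=> [|[|i]] c /=; rewrite ?List.nth_error_nil // => -[<-] _ /=; mrw; lia.
- move=> [A [B [-> ->]]] /= h _; split => //; case=> [|i] c /=; rewrite ?List.nth_error_nil // => -[<-] _ /=; mrw; lia.
- move=> [B [-> ->]] /= h _; move: h; mrw; rewrite (neF (hb B)) /= => h.
  split => //; case=> [|i] c /=; rewrite ?List.nth_error_nil // => -[<-] _ /=; mrw; lia.
- move=> [Pi [A [-> ->]]] /= h _; move: h; mrw; rewrite (mbox_nb _ hb) addn0 => h.
  split => //; case=> [|[|i]] c /=; rewrite ?List.nth_error_nil // => -[<-] _ /=; mrw; lia.
- move=> [A [-> ->]] /= h _; split => //; case=> [|[|i]] c /=; rewrite ?List.nth_error_nil // => -[<-] _ /=; mrw; lia.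
Qed.

Lemma right_side X r G D s ps :
  (forall q, X <> Fvar q) -> stepw r G D s ps -> (0 < cnt s.2 X)%N ->
  (r = RImpR -> forall A B, X = Fimp A B -> s = (G, X +` D) ->
     ps = [:: (A +` G, B +` D)] -> False) ->
  (r = RBox -> forall Pi A, X = Fbox A -> s = (G `+` mbox Pi, X +` D) ->
     ps = [:: (G `+` mbox Pi, A +` D); (mbox Pi, [mset A])] -> False) ->
  (0 < cnt D X)%N /\ forall i c, List.nth_error ps i = Some c ->
     ~~ (rule_eqb r RBox && (i == 1)%N) -> (0 < cnt c.2 X)%N.
Proof.
move=> hq; case: r => /=.
- move=> [-> [[q ->]|->]] /= h _ _; (split; last by case=> [|i] c; rewrite ?List.nth_error_nil).
    by move: h; mrw; rewrite (neF (hq q)).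
  done.
- move=> [A [B [-> ->]]] /= h _ _; split => //; case=> [|[|i]] c /=; rewrite ?List.nth_error_nil // => -[<-] _ /=; mrw; lia.
- move=> [A [B [-> ->]]] /= h hn _.
  case: (X =P Fimp A B) => [e|ne]; first by exfalso; apply: (hn erefl A B e) => //; rewrite e.
  move: h; mrw; rewrite (neF ne) /= => h; split => //; case=> [|i] c /=; rewrite ?List.nth_error_nil // => -[<-] _ /=; mrw; lia.
- move=> [B [-> ->]] /= h _ _; split => //; case=> [|i] c /=; rewrite ?List.nth_error_nil // => -[<-] _ /=; mrw; lia.
- move=> [Pi [A [-> ->]]] /= h _ hn.
  case: (X =P Fbox A) => [e|ne]; first by exfalso; apply: (hn erefl Pi A e) => //; rewrite e.
  move: h; mrw; rewrite (neF ne) /= => h; split => //; case=> [|[|i]] c /=; rewrite ?List.nth_error_nil // => -[<-] _ /=; mrw; lia.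
- move=> [A [-> ->]] /= h _ _; split => //; case=> [|[|i]] c /=; rewrite ?List.nth_error_nil // => -[<-] _ /=; mrw; lia.
Qed.

Definition nd := (sequent * rule * list sequent)%type.
Definition sp (P : nd -> Prop) (j : nat) (n : nd) : option nat :=
  if excluded_middle_informative (P n) then Some j else None.
Definition nope (n : nd) : option nat := None.

Lemma sp_some P j n j' : sp P j n = Some j' -> P n /\ j' = j.
Proof. by rewrite /sp; case: excluded_middle_informative => // h [<-]. Qed.
Lemma sp_none P j n : sp P j n = None -> ~ P n.
Proof. by rewrite /sp; case: excluded_middle_informative. Qed.

Definition isIL A B (n : nd) := n.1.2 = RImpL /\
  exists G D, n.1.1 = (Fimp A B +` G, D) /\ n.2 = [:: (B +` G, D); (G, A +` D)].
Definition isIR A B (n : nd) := n.1.2 = RImpR /\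
  exists G D, n.1.1 = (G, Fimp A B +` D) /\ n.2 = [:: (A +` G, B +` D)].
Definition isIB A (n : nd) := n.1.2 = RBox /\
  exists G Pi D, n.1.1 = (G `+` mbox Pi, Fbox A +` D) /\
    n.2 = [:: (G `+` mbox Pi, A +` D); (mbox Pi, [mset A])].

Definition W AL AR := Tr mset0 AL mset0 AR nope.
Definition Cp p := Tr [mset Fvar p] mset0 mset0 mset0 nope.
Definition IL1 A B := Tr [mset Fimp A B] [mset B] mset0 mset0 (sp (isIL A B) 0).
Definition IL2 A B := Tr [mset Fimp A B] mset0 mset0 [mset A] (sp (isIL A B) 1).
Definition IR A B := Tr mset0 [mset A] [mset Fimp A B] [mset B] (sp (isIR A B) 0).
Definition IB A := Tr mset0 mset0 [mset Fbox A] [mset A] (sp (isIB A) 0).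

Lemma msub0 G : msub mset0 G. Proof. by move=> x; rewrite m0. Qed.
Lemma msub1 a G : (0 < cnt G a)%N -> msub [mset a] G.
Proof. by move=> h x; rewrite m1; case: eqP => [->|]. Qed.

Lemma T4_nope n j : nope n = Some j -> ~~ (rule_eqb n.1.2 RBox && (j == 1)%N). Proof. by []. Qed.
Lemma T4_IL A B j n j' : (j <= 1)%N -> sp (isIL A B) j n = Some j' -> ~~ (rule_eqb n.1.2 RBox && (j' == 1)%N).
Proof. by move=> _ /sp_some [[-> _] _]. Qed.
Lemma T4_IR A B n j' : sp (isIR A B) 0 n = Some j' -> ~~ (rule_eqb n.1.2 RBox && (j' == 1)%N).
Proof. by move=> /sp_some [[-> _] _]. Qed.
Lemma T4_IB A n j' : sp (isIB A) 0 n = Some j' -> ~~ (rule_eqb n.1.2 RBox && (j' == 1)%N).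
Proof. by move=> /sp_some [_ ->]; rewrite andbF. Qed.

Lemma W_E k AL AR t t' : E k.+1 t t' -> E k.+1 (W AL AR t) (W AL AR t').
Proof. exact: (Tr_E _ _ _ _ (@T4_nope)). Qed.
Lemma Cp_E k p t t' : E k.+1 t t' -> E k.+1 (Cp p t) (Cp p t').
Proof. exact: (Tr_E _ _ _ _ (@T4_nope)). Qed.
Lemma IL1_E k A B t t' : E k.+1 t t' -> E k.+1 (IL1 A B t) (IL1 A B t').
Proof. exact: (Tr_E _ _ _ _ (fun n j' => @T4_IL A B 0 n j' erefl)). Qed.
Lemma IL2_E k A B t t' : E k.+1 t t' -> E k.+1 (IL2 A B t) (IL2 A B t').
Proof. exact: (Tr_E _ _ _ _ (fun n j' => @T4_IL A B 1 n j' erefl)). Qed.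
Lemma IR_E k A B t t' : E k.+1 t t' -> E k.+1 (IR A B t) (IR A B t').
Proof. exact: (Tr_E _ _ _ _ (@T4_IR A B)). Qed.
Lemma IB_E k A t t' : E k.+1 t t' -> E k.+1 (IB A t) (IB A t').
Proof. exact: (Tr_E _ _ _ _ (@T4_IB A)). Qed.

Lemma W_NC k AL AR t : NoCut k.+1 t -> NoCut k.+1 (W AL AR t).
Proof. exact: (@Tr_NC _ _ _ _ _ (@T4_nope)). Qed.
Lemma Cp_NC k p t : NoCut k.+1 t -> NoCut k.+1 (Cp p t).
Proof. exact: (@Tr_NC _ _ _ _ _ (@T4_nope)). Qed.
Lemma IL1_NC k A B t : NoCut k.+1 t -> NoCut k.+1 (IL1 A B t).
Proof. exact: (@Tr_NC _ _ _ _ _ (fun n j' => @T4_IL A B 0 n j' erefl)). Qed.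
Lemma IL2_NC k A B t : NoCut k.+1 t -> NoCut k.+1 (IL2 A B t).
Proof. exact: (@Tr_NC _ _ _ _ _ (fun n j' => @T4_IL A B 1 n j' erefl)). Qed.
Lemma IR_NC k A B t : NoCut k.+1 t -> NoCut k.+1 (IR A B t).
Proof. exact: (@Tr_NC _ _ _ _ _ (@T4_IR A B)). Qed.
Lemma IB_NC k A t : NoCut k.+1 t -> NoCut k.+1 (IB A t).
Proof. exact: (@Tr_NC _ _ _ _ _ (@T4_IB A)). Qed.

Lemma kids_map (t : tree) (Q : nat -> Prop) (P : sequent -> Prop) :
  (forall i c, List.nth_error (List.map root (children t)) i = Some c -> Q i -> P c) ->
  forall i c, List.nth_error (children t) i = Some c -> Q i -> P (root c).
Proof. by move=> h i c e; apply: h; rewrite List.nth_error_map e. Qed.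

Lemma W_T2 AL AR t j : is_iproof t -> (fun _ => True) (root t) -> nope (ni t) = Some j ->
  exists c, List.nth_error (children t) j = Some c /\ root c = M mset0 AL mset0 AR (root t).
Proof. by []. Qed.
Lemma W_T3 t : is_iproof t -> (fun _ => True) (root t) -> nope (ni t) = None ->
  exists G D, [/\ stepw (rule_of t) G D (root t) (List.map root (children t)), msub mset0 G, msub mset0 D &
    forall i c, List.nth_error (children t) i = Some c ->
      ~~ (rule_eqb (rule_of t) RBox && (i == 1)%N) -> (fun _ => True) (root c)].
Proof. by move=> h _ _; have [G [D w]] := iproof_w h; exists G, D; split => //; exact: msub0. Qed.

Lemma W_root AL AR t : is_iproof t -> root (W AL AR t) = ((root t).1 `+` AL, (root t).2 `+` AR).
Proof.
move=> h; rewrite /W (@Tr_root _ _ _ _ _ (fun _ => True) (@W_T2 AL AR)) // /M; congr (_, _); meq.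
Qed.
Lemma W_iproof AL AR t : is_iproof t -> is_iproof (W AL AR t).
Proof. by move=> h; apply: (@Tr_iproof _ _ _ _ _ (fun _ => True) (@W_T2 AL AR) W_T3). Qed.

Lemma Cp_T2 p t j : is_iproof t -> (fun s => 1 < cnt s.1 (Fvar p))%N (root t) -> nope (ni t) = Some j ->
  exists c, List.nth_error (children t) j = Some c /\ root c = M [mset Fvar p] mset0 mset0 mset0 (root t).
Proof. by []. Qed.
Lemma Cp_T3 p t : is_iproof t -> (fun s => 1 < cnt s.1 (Fvar p))%N (root t) -> nope (ni t) = None ->
  exists G D, [/\ stepw (rule_of t) G D (root t) (List.map root (children t)),
    msub [mset Fvar p] G, msub mset0 D &
    forall i c, List.nth_error (children t) i = Some c ->
      ~~ (rule_eqb (rule_of t) RBox && (i == 1)%N) -> (fun s => 1 < cnt s.1 (Fvar p))%N (root c)].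
Proof.
move=> h hv _; have [G [D w]] := iproof_w h; exists G, D.
suff [h1 h2] : (0 < cnt G (Fvar p))%N /\ forall i c,
    List.nth_error (List.map root (children t)) i = Some c ->
    ~~ (rule_eqb (rule_of t) RBox && (i == 1)%N) -> (1 < cnt c.1 (Fvar p))%N.
  by split => //; [exact: msub1 | exact: msub0 | exact: kids_map h2].
move: (rule_of t) (root t) (List.map root (children t)) w hv => r s ps; case: r => /=.
- move=> [-> [[q ->]|->]] /= hv; move: hv; mrw => hv;
  (split; [lia| by case=> [|i] c; rewrite ?List.nth_error_nil]).
- move=> [A [B [-> ->]]] /= hv; move: hv; mrw; nq => hv.
  split; [lia|]; case=> [|[|i]] c /=; rewrite ?List.nth_error_nil // => -[<-] _ /=; mrw; lia.
- move=> [A [B [-> ->]]] /= hv.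
  split; [lia|]; case=> [|i] c /=; rewrite ?List.nth_error_nil // => -[<-] _ /=; mrw; lia.
- move=> [B [-> ->]] /= hv; move: hv; mrw; nq => hv.
  split; [lia|]; case=> [|i] c /=; rewrite ?List.nth_error_nil // => -[<-] _ /=; mrw; lia.
- move=> [Pi [A [-> ->]]] /= hv; move: hv; mrw; rewrite mbox_nb // addn0 => hv.
  split; [lia|]; case=> [|[|i]] c /=; rewrite ?List.nth_error_nil // => -[<-] _ /=; mrw; lia.
- move=> [A [-> ->]] /= hv.
  split; [lia|]; case=> [|[|i]] c /=; rewrite ?List.nth_error_nil // => -[<-] _ /=; mrw; lia.
Qed.

Lemma Cp_root p t : is_iproof t -> (1 < cnt (root t).1 (Fvar p))%N ->
  root (Cp p t) = ((root t).1 `\` [mset Fvar p], (root t).2).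
Proof.
move=> h hv; rewrite /Cp (@Tr_root _ _ _ _ _ (fun s => 1 < cnt s.1 (Fvar p))%N (@Cp_T2 p)) // /M.
congr (_, _); meq.
Qed.
Lemma Cp_iproof p t : is_iproof t -> (1 < cnt (root t).1 (Fvar p))%N -> is_iproof (Cp p t).
Proof. by move=> h hv; apply: (@Tr_iproof _ _ _ _ _ (fun s => 1 < cnt s.1 (Fvar p))%N (@Cp_T2 p) (@Cp_T3 p)). Qed.

Definition ivL X := fun s : sequent => (0 < cnt s.1 X)%N.
Definition ivR X := fun s : sequent => (0 < cnt s.2 X)%N.

Lemma IL_T3 A B j t : is_iproof t -> ivL (Fimp A B) (root t) -> sp (isIL A B) j (ni t) = None ->
  exists G D, [/\ stepw (rule_of t) G D (root t) (List.map root (children t)),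
    msub [mset Fimp A B] G, msub mset0 D &
    forall i c, List.nth_error (children t) i = Some c ->
      ~~ (rule_eqb (rule_of t) RBox && (i == 1)%N) -> ivL (Fimp A B) (root c)].
Proof.
move=> h hv /sp_none hn; have [G [D w]] := iproof_w h; exists G, D.
have hb : forall B0, Fimp A B <> Fbox B0 by [].
have hq : forall q, Fimp A B <> Fvar q by [].
have hf : Fimp A B <> Fbot by [].
have [h1 h2] := left_side hb hq hf w hv
  (fun er A' B' e es eps => ltac:(move: es eps; case: e => <- <- es eps; apply: hn; split => //; exists G, D; by rewrite /= es eps)).
split => //; [exact: msub1 | exact: msub0 | exact: kids_map h2].
Qed.

Lemma IL1_T2 A B t j : is_iproof t -> ivL (Fimp A B) (root t) -> sp (isIL A B) 0 (ni t) = Some j ->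
  exists c, List.nth_error (children t) j = Some c /\
    root c = M [mset Fimp A B] [mset B] mset0 mset0 (root t).
Proof.
move=> _ _ /sp_some [[_ [G [D []]]]]; rewrite /ni /= => -> + ->.
case: (children t) => [|c0 [|c1 [|c2 l]]] //= [e0 e1].
by exists c0; split => //; rewrite e0 /M /=; congr (_, _); meq.
Qed.
Lemma IL2_T2 A B t j : is_iproof t -> ivL (Fimp A B) (root t) -> sp (isIL A B) 1 (ni t) = Some j ->
  exists c, List.nth_error (children t) j = Some c /\
    root c = M [mset Fimp A B] mset0 mset0 [mset A] (root t).
Proof.
move=> _ _ /sp_some [[_ [G [D []]]]]; rewrite /ni /= => -> + ->.
case: (children t) => [|c0 [|c1 [|c2 l]]] //= [e0 e1].
by exists c1; split => //; rewrite e1 /M /=; congr (_, _); meq.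
Qed.

Lemma IL1_root A B t : is_iproof t -> ivL (Fimp A B) (root t) ->
  root (IL1 A B t) = (B +` ((root t).1 `\` [mset Fimp A B]), (root t).2).
Proof.
move=> h hv; rewrite /IL1 (@Tr_root _ _ _ _ _ (ivL (Fimp A B)) (@IL1_T2 A B)) // /M.
congr (_, _); meq.
Qed.
Lemma IL1_iproof A B t : is_iproof t -> ivL (Fimp A B) (root t) -> is_iproof (IL1 A B t).
Proof. by move=> h hv; apply: (@Tr_iproof _ _ _ _ _ (ivL (Fimp A B)) (@IL1_T2 A B) (@IL_T3 A B 0)). Qed.
Lemma IL2_root A B t : is_iproof t -> ivL (Fimp A B) (root t) ->
  root (IL2 A B t) = ((root t).1 `\` [mset Fimp A B], A +` (root t).2).
Proof.
move=> h hv; rewrite /IL2 (@Tr_root _ _ _ _ _ (ivL (Fimp A B)) (@IL2_T2 A B)) // /M.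
congr (_, _); meq.
Qed.
Lemma IL2_iproof A B t : is_iproof t -> ivL (Fimp A B) (root t) -> is_iproof (IL2 A B t).
Proof. by move=> h hv; apply: (@Tr_iproof _ _ _ _ _ (ivL (Fimp A B)) (@IL2_T2 A B) (@IL_T3 A B 1)). Qed.

Lemma IR_T2 A B t j : is_iproof t -> ivR (Fimp A B) (root t) -> sp (isIR A B) 0 (ni t) = Some j ->
  exists c, List.nth_error (children t) j = Some c /\
    root c = M mset0 [mset A] [mset Fimp A B] [mset B] (root t).
Proof.
move=> _ _ /sp_some [[_ [G [D []]]]]; rewrite /ni /= => -> + ->.
case: (children t) => [|c0 [|c1 l]] //= [e0].
by exists c0; split => //; rewrite e0 /M /=; congr (_, _); meq.
Qed.
Lemma IR_T3 A B t : is_iproof t -> ivR (Fimp A B) (root t) -> sp (isIR A B) 0 (ni t) = None ->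
  exists G D, [/\ stepw (rule_of t) G D (root t) (List.map root (children t)),
    msub mset0 G, msub [mset Fimp A B] D &
    forall i c, List.nth_error (children t) i = Some c ->
      ~~ (rule_eqb (rule_of t) RBox && (i == 1)%N) -> ivR (Fimp A B) (root c)].
Proof.
move=> h hv /sp_none hn; have [G [D w]] := iproof_w h; exists G, D.
have hq : forall q, Fimp A B <> Fvar q by [].
have [h1 h2] := right_side hq w hv
  (fun er A' B' e es eps => ltac:(move: es eps; case: e => <- <- es eps; apply: hn; split => //; exists G, D; by rewrite /= es eps))
  (fun _ Pi A' e _ _ => ltac:(discriminate)).
split => //; [exact: msub0 | exact: msub1 | exact: kids_map h2].
Qed.
Lemma IR_root A B t : is_iproof t -> ivR (Fimp A B) (root t) ->
  root (IR A B t) = (A +` (root t).1, B +` ((root t).2 `\` [mset Fimp A B])).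
Proof.
move=> h hv; rewrite /IR (@Tr_root _ _ _ _ _ (ivR (Fimp A B)) (@IR_T2 A B)) // /M.
congr (_, _); meq.
Qed.
Lemma IR_iproof A B t : is_iproof t -> ivR (Fimp A B) (root t) -> is_iproof (IR A B t).
Proof. by move=> h hv; apply: (@Tr_iproof _ _ _ _ _ (ivR (Fimp A B)) (@IR_T2 A B) (@IR_T3 A B)). Qed.

Lemma IB_T2 A t j : is_iproof t -> ivR (Fbox A) (root t) -> sp (isIB A) 0 (ni t) = Some j ->
  exists c, List.nth_error (children t) j = Some c /\
    root c = M mset0 mset0 [mset Fbox A] [mset A] (root t).
Proof.
move=> _ _ /sp_some [[_ [G [Pi [D []]]]]]; rewrite /ni /= => -> + ->.
case: (children t) => [|c0 [|c1 [|c2 l]]] //= [e0 e1].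
by exists c0; split => //; rewrite e0 /M /=; congr (_, _); meq.
Qed.
Lemma IB_T3 A t : is_iproof t -> ivR (Fbox A) (root t) -> sp (isIB A) 0 (ni t) = None ->
  exists G D, [/\ stepw (rule_of t) G D (root t) (List.map root (children t)),
    msub mset0 G, msub [mset Fbox A] D &
    forall i c, List.nth_error (children t) i = Some c ->
      ~~ (rule_eqb (rule_of t) RBox && (i == 1)%N) -> ivR (Fbox A) (root c)].
Proof.
move=> h hv /sp_none hn; have [G [D w]] := iproof_w h; exists G, D.
have hq : forall q, Fbox A <> Fvar q by [].
have [h1 h2] := right_side hq w hv (fun _ A' B' e _ _ => ltac:(discriminate))
  (fun er Pi A' e es eps => ltac:(move: es eps; case: e => <- es eps; apply: hn; split => //; exists G, Pi, D; by rewrite /= es eps)).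
split => //; [exact: msub0 | exact: msub1 | exact: kids_map h2].
Qed.
Lemma IB_root A t : is_iproof t -> ivR (Fbox A) (root t) ->
  root (IB A t) = ((root t).1, A +` ((root t).2 `\` [mset Fbox A])).
Proof.
move=> h hv; rewrite /IB (@Tr_root _ _ _ _ _ (ivR (Fbox A)) (@IB_T2 A)) // /M.
congr (_, _); meq.
Qed.
Lemma IB_iproof A t : is_iproof t -> ivR (Fbox A) (root t) -> is_iproof (IB A t).
Proof. by move=> h hv; apply: (@Tr_iproof _ _ _ _ _ (ivR (Fbox A)) (@IB_T2 A) (@IB_T3 A)). Qed.

Section Re.
Variable p : nat.

Definition out (s : sequent) : sequent := (s.1, s.2 `\` [mset Fvar p]).
Definition initial (s : sequent) : Prop :=
  (exists G D q, s = (Fvar q +` G, Fvar q +` D)) \/ (exists G D, s = (Fbot +` G, D)).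

Definition PIL (n : nd) (ab : form * form) := exists G D,
  n.1.1 = (Fimp ab.1 ab.2 +` G, D) /\ n.2 = [:: (ab.2 +` G, D); (G, ab.1 +` D)].
Definition PIR (n : nd) (ab : form * form) := exists G D,
  n.1.1 = (G, Fimp ab.1 ab.2 +` D) /\ n.2 = [:: (ab.1 +` G, ab.2 +` D)].
Definition PRf (n : nd) B := exists G D,
  n.1.1 = (Fbox B +` G, D) /\ n.2 = [:: (B +` (Fbox B +` G), D)].
Definition PBx (n : nd) A := exists G Pi D,
  n.1.1 = (G `+` mbox Pi, Fbox A +` D) /\ n.2 = [:: (G `+` mbox Pi, A +` D); (mbox Pi, [mset A])].
Definition PCt (n : nd) A := exists G D,
  n.1.1 = (G, D) /\ n.2 = [:: (G, A +` D); (A +` G, D)].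

Definition inh2 : inhabited (form * form) := inhabits (Fbot, Fbot).
Definition inh1 : inhabited form := inhabits Fbot.
Definition wIL n := epsilon inh2 (PIL n).
Definition wIR n := epsilon inh2 (PIR n).
Definition wRf n := epsilon inh1 (PRf n).
Definition wBx n := epsilon inh1 (PBx n).
Definition wCt n := epsilon inh1 (PCt n).

Definition reDecN (tau : tree) (n : nd) : tree + sequent :=
  match n.1.2 with
  | RInit => if excluded_middle_informative (initial (out n.1.1)) then inr (out n.1.1)
             else inl (Cp p tau)
  | _ => inr (out n.1.1)
  end.

Definition reNxtN (tau : tree) (n : nd) (i : nat) : tree :=
  match n.1.2 with
  | RImpL => if i == 0 then IL1 (wIL n).1 (wIL n).2 tau else IL2 (wIL n).1 (wIL n).2 tau
  | RImpR => IR (wIR n).1 (wIR n).2 tau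
  | RRefl => W [mset wRf n] mset0 tau
  | RBox => IB (wBx n) tau
  | RCut => if i == 0 then W mset0 [mset wCt n] tau else W [mset wCt n] mset0 tau
  | RInit => tau
  end.

Definition reD (tau pi : tree) := reDecN tau (ni pi).
Definition reX (tau pi : tree) (i : nat) := reNxtN tau (ni pi) i.
Definition re := gen reD reX.

Definition Inv (tau pi : tree) := [/\ is_iproof pi, is_iproof tau,
  (0 < cnt (root pi).2 (Fvar p))%N &
  root tau = (Fvar p +` (root pi).1, (root pi).2 `\` [mset Fvar p])].

Lemma step_cases pi : is_iproof pi ->
  match rule_of pi with
  | RInit => children pi = nil /\ initial (root pi)
  | RImpL => PIL (ni pi) (wIL (ni pi))
  | RImpR => PIR (ni pi) (wIR (ni pi))
  | RRefl => PRf (ni pi) (wRf (ni pi))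
  | RBox => PBx (ni pi) (wBx (ni pi))
  | RCut => PCt (ni pi) (wCt (ni pi))
  end.
Proof.
move=> h; have [G [D w]] := iproof_w h; move: w.
rewrite /wIL /wIR /wRf /wBx /wCt; case: (rule_of pi) => /=.
- move=> [e [[q e1]|e1]]; split; try by case: (children pi) e.
  + by left; exists G, D, q.
  + by right; exists G, D.
- by move=> [A [B [e1 e2]]]; apply: epsilon_spec; exists (A, B), G, D.
- by move=> [A [B [e1 e2]]]; apply: epsilon_spec; exists (A, B), G, D.
- by move=> [B [e1 e2]]; apply: epsilon_spec; exists B, G, D.
- by move=> [Pi [A [e1 e2]]]; apply: epsilon_spec; exists A, G, Pi, D.
- by move=> [A [e1 e2]]; apply: epsilon_spec; exists A, G, D.
Qed.

Lemma init_p pi : is_iproof pi -> rule_of pi = RInit -> (0 < cnt (root pi).2 (Fvar p))%N ->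
  ~ initial (out (root pi)) -> (0 < cnt (root pi).1 (Fvar p))%N.
Proof.
move=> h er hv hn; have := step_cases h; rewrite er => -[_ [[G [D [q e]]]|[G [D e]]]];
  rewrite e /= in hv *.
- case: (q =P p) => [<-|ne]; first by mrw; rewrite eqxx; lia.
  have hne : Fvar p <> Fvar q by move=> [e']; apply: ne.
  exfalso; apply: hn; left; exists G, (D `\` [mset Fvar p]), q; rewrite e /out /=; congr (_, _).
  apply: cnt_ext => x; case: (x =P Fvar p) => [->|/neF ne']; mrw; rewrite ?eqxx ?ne' ?(neF hne); lia.
- by exfalso; apply: hn; right; exists G, (D `\` [mset Fvar p]); rewrite e.
Qed.

Lemma reD_inl tau pi u : Inv tau pi -> reD tau pi = inl u ->
  u = Cp p tau /\ (1 < cnt (root tau).1 (Fvar p))%N.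
Proof.
move=> [h1 h2 h3 h4]; rewrite /reD /reDecN /=.
case er: (rule_of pi) => //; case: excluded_middle_informative => // hn [<-]; split => //.
have := init_p h1 er h3 hn; rewrite h4 /=; mrw; rewrite eqxx; lia.
Qed.

Lemma re_root tau pi : Inv tau pi -> root (re tau pi) = out (root pi).
Proof.
move=> hI; rewrite /re gen_unfold; case e: (reD tau pi) => [u|s].
  have [-> hc] := reD_inl hI e; case: hI => [_ h2 h3 h4].
  rewrite (Cp_root h2 hc) h4 /out /=; congr (_, _); meq.
move: e; rewrite /reD /reDecN /=; case: (rule_of pi) => //; try case: excluded_middle_informative => _ /=; by case.
Qed.
End Re.

Section Re2.
Variable p : nat.

Ltac meqp := apply: cnt_ext; let x := fresh "x" in let ne := fresh "ne" in
  intro x; case: (x =P Fvar p) => [->|/neF ne]; mrw; rewrite ?eqxx ?ne; nq; lia.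

Lemma re_child_inv tau pi i c : Inv p tau pi -> List.nth_error (children pi) i = Some c ->
  isgen pi i -> Inv p (reX tau pi i) c.
Proof.
move=> hI ec g; have [h1 h2 h3 h4] := hI.
have hc : is_iproof c := iproof_child h1 ec.
have := step_cases h1; rewrite /reX /reNxtN /=.
move: g; rewrite /isgen; case er: (rule_of pi) => /= g.
- by move=> [e _]; rewrite e in ec; case: i ec {g}.
- case: (wIL (ni pi)) => A B /= [G [D []]]; rewrite /ni /= => hs hm.
  rewrite hs /= in h3 h4.
  have iv : ivL (Fimp A B) (root tau) by rewrite /ivL h4 /=; mrw; rewrite eqxx; lia.
  move: ec hm; case: (children pi) => [|c0 [|c1 [|c2 l]]] //= ec [e0 e1].
  case: i g ec => [|[|i]] //= g [?]; subst c.
    split => //; [exact: IL1_iproof|by rewrite e0|].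
    by rewrite (IL1_root h2 iv) h4 e0 /=; congr (_, _); meq.
  split => //; [exact: IL2_iproof|by rewrite e1 /=; mrw; lia|].
  by rewrite (IL2_root h2 iv) h4 e1 /=; congr (_, _); [meq|meqp].
- case: (wIR (ni pi)) => A B /= [G [D []]]; rewrite /ni /= => hs hm.
  rewrite hs /= in h3 h4; move: h3; mrw; nq => h3.
  have iv : ivR (Fimp A B) (root tau) by rewrite /ivR h4 /=; mrw; rewrite eqxx; nq; lia.
  move: ec hm; case: (children pi) => [|c0 [|c1 l]] //= ec [e0].
  case: i g ec => [|[|i]] //= g [?]; subst c.
  split => //; [exact: IR_iproof|by rewrite e0 /=; mrw; lia|].
  by rewrite (IR_root h2 iv) h4 e0 /=; congr (_, _); [meq|meqp].
- move: (wRf (ni pi)) => B /= [G [D []]]; rewrite /ni /= => hs hm.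
  rewrite hs /= in h3 h4.
  move: ec hm; case: (children pi) => [|c0 [|c1 l]] //= ec [e0].
  case: i g ec => [|[|i]] //= g [?]; subst c.
  split => //; [exact: W_iproof|by rewrite e0|].
  by rewrite (W_root _ _ h2) h4 e0 /=; congr (_, _); meq.
- move: (wBx (ni pi)) => A /= [G [Pi [D []]]]; rewrite /ni /= => hs hm.
  rewrite hs /= in h3 h4; move: h3; mrw; nq => h3.
  have iv : ivR (Fbox A) (root tau) by rewrite /ivR h4 /=; mrw; rewrite eqxx; nq; lia.
  move: ec hm; case: (children pi) => [|c0 [|c1 [|c2 l]]] //= ec [e0 e1].
  case: i g ec => [|[|i]] //= g [?]; subst c.
  split => //; [exact: IB_iproof|by rewrite e0 /=; mrw; lia|].
  by rewrite (IB_root h2 iv) h4 e0 /=; congr (_, _); meqp.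
- move: (wCt (ni pi)) => A /= [G [D []]]; rewrite /ni /= => hs hm.
  rewrite hs /= in h3 h4.
  move: ec hm; case: (children pi) => [|c0 [|c1 [|c2 l]]] //= ec [e0 e1].
  case: i g ec => [|[|i]] //= g [?]; subst c.
    split => //; [exact: W_iproof|by rewrite e0 /=; mrw; lia|].
    by rewrite (W_root _ _ h2) h4 e0 /=; congr (_, _); [meq|meqp].
  split => //; [exact: W_iproof|by rewrite e1|].
  by rewrite (W_root _ _ h2) h4 e1 /=; congr (_, _); meq.
Qed.
End Re2.

Section Re3.
Variable p : nat.

Ltac meqp := apply: cnt_ext; let x := fresh "x" in let ne := fresh "ne" in
  intro x; case: (x =P Fvar p) => [->|/neF ne]; mrw; rewrite ?eqxx ?ne; nq; lia.

Lemma pair_eq (a c : {mset form}) (b d : {mset form}) : a = c -> b = d -> (a, b) = (c, d).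
Proof. by move=> -> ->. Qed.
Lemma cons_eq (a b : sequent) (l l' : list sequent) : a = b -> l = l' -> a :: l = b :: l'.
Proof. by move=> -> ->. Qed.
Ltac peq := repeat (first [reflexivity | apply: pair_eq | apply: cons_eq]); try meqp.

Lemma reD_inr tau pi s : reD p tau pi = inr s -> s = out p (root pi).
Proof.
rewrite /reD /reDecN /=; case: (rule_of pi) => //; try case: excluded_middle_informative => _ /=; by case.
Qed.

Lemma re_step tau pi s : Inv p tau pi -> reD p tau pi = inr s ->
  step s (rule_of pi) (List.map root (kids (reD p) reX tau pi)).
Proof.
move=> hI e; have [h1 h2 h3 h4] := hI.
have es := reD_inr e; subst s.
have R : forall i c, List.nth_error (children pi) i = Some c -> isgen pi i ->
    root (gen (reD p) reX (reX tau pi i) c) = out p (root c).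
  by move=> i c ec g; exact: re_root (re_child_inv hI ec g).
have := step_cases h1; rewrite /kids.
case er: (rule_of pi) => /=.
- move=> [ech hi]; rewrite ech /=; split => //.
  by move: e; rewrite /reD /reDecN /= er; case: excluded_middle_informative.
- case: (wIL (ni pi)) => A B /= [G [D []]]; rewrite /ni /= => hs hm.
  rewrite hs /= in h3 *.
  case ech: (children pi) hm => [|c0 [|c1 [|c2 l]]] // hm; case: hm => e0 e1; cbn [List.map rule_eqb].
  rewrite (R 0 c0 ltac:(by rewrite ech) ltac:(by rewrite /isgen andbF)) (R 1 c1 ltac:(by rewrite ech) ltac:(by rewrite /isgen er)) e0 e1.
  exists G, (D `\` [mset Fvar p]), A, B; rewrite /out /=; split => //.
  peq.
- case: (wIR (ni pi)) => A B /= [G [D []]]; rewrite /ni /= => hs hm.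
  rewrite hs /= in h3 *; move: h3; mrw; nq => h3.
  case ech: (children pi) hm => [|c0 [|c1 l]] // hm; case: hm => e0; cbn [List.map rule_eqb].
  rewrite (R 0 c0 ltac:(by rewrite ech) ltac:(by rewrite /isgen andbF)) e0.
  exists G, (D `\` [mset Fvar p]), A, B; rewrite /out /=; split.
    peq.
  peq.
- move: (wRf (ni pi)) => B /= [G [D []]]; rewrite /ni /= => hs hm.
  rewrite hs /= in h3 *.
  case ech: (children pi) hm => [|c0 [|c1 l]] // hm; case: hm => e0; cbn [List.map rule_eqb].
  rewrite (R 0 c0 ltac:(by rewrite ech) ltac:(by rewrite /isgen andbF)) e0.
  by exists G, (D `\` [mset Fvar p]), B; rewrite /out /=; split.
- move: (wBx (ni pi)) => A /= [G [Pi [D []]]]; rewrite /ni /= => hs hm.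
  rewrite hs /= in h3 *; move: h3; mrw; nq => h3.
  case ech: (children pi) hm => [|c0 [|c1 [|c2 l]]] // hm; case: hm => e0 e1; cbn [List.map rule_eqb].
  rewrite (R 0 c0 ltac:(by rewrite ech) ltac:(by rewrite /isgen andbF)) e0 e1.
  exists G, Pi, (D `\` [mset Fvar p]), A; rewrite /out /=; split.
    peq.
  peq.
- move: (wCt (ni pi)) => A /= [G [D []]]; rewrite /ni /= => hs hm.
  rewrite hs /= in h3 *.
  case ech: (children pi) hm => [|c0 [|c1 [|c2 l]]] // hm; case: hm => e0 e1; cbn [List.map rule_eqb].
  rewrite (R 0 c0 ltac:(by rewrite ech) ltac:(by rewrite /isgen andbF)) (R 1 c1 ltac:(by rewrite ech) ltac:(by rewrite /isgen er)) e0 e1.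
  exists G, (D `\` [mset Fvar p]), A; rewrite /out /=; split => //.
  peq.
Qed.

Lemma re_iproof tau pi : Inv p tau pi -> is_iproof (re p tau pi).
Proof.
move=> hI; apply: (@gen_iproof _ _ _ (Inv p)) => //.
- by move=> sg t [].
- move=> sg t u h e; have [-> hc] := reD_inl h e; case: h => _ h2 _ _; exact: Cp_iproof.
- move=> sg t s h e; split; first exact: re_step h e.
  by move=> i c ec g; apply: re_child_inv.
Qed.

Lemma re_E k tau tau' pi pi' : E k.+1 tau tau' -> E k.+1 pi pi' ->
  E k.+1 (re p tau pi) (re p tau' pi').
Proof.
move=> h1 h2; eapply (@gen_E _ _ _ E); [|exact: h1|exact: h2]; move=> k0 sg sg' t t' hs ht.
rewrite /reD /reX (E_ni ht) /reDecN /reNxtN; case: (ni t').1.2 => /=.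
- split => //; case: excluded_middle_informative => hin; [right; by eexists|left].
  by do 2 eexists; split; [reflexivity|reflexivity|exact: Cp_E].
- split; [right; by eexists|exact: IL1_E|move=> _; exact: IL2_E].
- split; [right; by eexists|exact: IR_E|move=> _; exact: IR_E].
- split; [right; by eexists|exact: W_E|move=> _; exact: W_E].
- split; [right; by eexists|exact: IB_E|move=> _; exact: IB_E].
- split; [right; by eexists|exact: W_E|move=> _; exact: W_E].
Qed.

Lemma re_NC k tau pi : NoCut k.+1 tau -> NoCut k.+1 pi -> NoCut k.+1 (re p tau pi).
Proof.
move=> h1 h2; eapply (@gen_NC _ _ _ NoCut); [|exact: h1|exact: h2]; move=> k0 sg t hs ht.
rewrite /reD /reX /reDecN /reNxtN; case: (ni t).1.2 => /=.
- split => // u; case: excluded_middle_informative => // _ [<-]; exact: Cp_NC.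
- split => //; [exact: IL1_NC|move=> _; exact: IL2_NC].
- split => //; [exact: IR_NC|move=> _; exact: IR_NC].
- split => //; [exact: W_NC|move=> _; exact: W_NC].
- split => //; [exact: IB_NC|move=> _; exact: IB_NC].
- split => //; [exact: W_NC|move=> _; exact: W_NC].
Qed.

Definition Pc (pi tau : iproof) : Prop := (0 < cnt (iroot pi).2 (Fvar p))%N /\
  iroot tau = (Fvar p +` (iroot pi).1, (iroot pi).2 `\` [mset Fvar p]).

Lemma Pc_inv pi tau : Pc pi tau -> Inv p (proj1_sig tau) (proj1_sig pi).
Proof. by case: pi tau => [pi hp] [tau ht] [h1 h2]; split. Qed.

Definition reu (pi tau : iproof) : iproof :=
  match excluded_middle_informative (Pc pi tau) with
  | left h => exist _ (re p (proj1_sig tau) (proj1_sig pi)) (re_iproof (Pc_inv h))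
  | right _ => pi
  end.
End Re3.

Theorem lemma6p2 : forall p : nat,
  exists re_p : iproof -> iproof -> iproof, removing (Fvar p) re_p /\ adequate re_p.
Proof.
move=> p; exists (reu p); split; [split|].
- move=> [|k] pi pi' tau tau' h1 h2 //=.
  have r1 : iroot pi = iroot pi' by exact: E_root0 h1.
  have r2 : iroot tau = iroot tau' by exact: E_root0 h2.
  rewrite /reu; case: excluded_middle_informative => H; case: excluded_middle_informative => H' /=.
  + exact: re_E h2 h1.
  + by exfalso; apply: H'; move: H; rewrite /Pc r1 r2.
  + by exfalso; apply: H; move: H'; rewrite /Pc r1 r2.
  + exact: h1.
- move=> G D pi tau [e1 e2].
  have hP : Pc p pi tau.
    rewrite /Pc e1 e2 /=; split; first by mrw; rewrite eqxx; lia.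
    by congr (_, _); apply: cnt_ext => x; mrw; lia.
  rewrite /reu; case: excluded_middle_informative => // H.
  change (root (re p (proj1_sig tau) (proj1_sig pi)) = (G, D)).
  rewrite re_root; last exact: Pc_inv.
  by rewrite /out -/(iroot pi) e1 /=; congr (_, _); apply: cnt_ext => x; mrw; lia.
- move=> [|k] pi tau h1 h2 //=.
  rewrite /reu; case: excluded_middle_informative => H //=.
  exact: re_NC h2 h1.
Qed.
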